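(* Let $G=(V,E_r,E_b)$ be a two-colored graph that contains no monochromatic $K_3$ and no monochromatic $P_3$ as induced subgraphs. Then every vertex of $G$ is incident with at most two blue edges and with at most two red edges.
   Context: A two-colored graph $G=(V,E_r,E_b)$ is a finite simple undirected graph whose edge set is partitioned into red edges $E_r$ and blue edges $E_b$. A monochromatic $K_3$ is a triangle all three of whose edges have the same color. A monochromatic $P_3$ is an induced path on three vertices $u,v,w$ (edges $\{u,v\},\{v,w\}$, non-edge $\{u,w\}$) whose two edges have the same color. *)

(* Defs.v *)
From mathcomp Require Import all_boot.
Set Implicit Arguments. Unset Strict Implicit. Unset Printing Implicit Defensive.

Record two_colored_graph (T : finType) := TwoColoredGraph {
  red : rel T;
  blue : rel T;
  red_sym : symmetric red;
  blue_sym : symmetric blue;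
  red_irr : irreflexive red;
  blue_irr : irreflexive blue;
  red_blue_disj : forall x y, ~~ (red x y && blue x y)
}.

Definition adj (T : finType) (G : two_colored_graph T) (x y : T) : bool :=
  red G x y || blue G x y.

Definition mono_K3 (T : finType) (c : rel T) (u v w : T) : Prop :=
  [/\ c u v, c v w & c u w].

Definition mono_P3 (T : finType) (G : two_colored_graph T) (c : rel T)
  (u v w : T) : Prop :=
  [/\ u != w, c u v, c v w & ~~ adj G u w].

Definition mono_K3_free (T : finType) (G : two_colored_graph T) : Prop :=
  forall u v w, ~ mono_K3 (red G) u v w /\ ~ mono_K3 (blue G) u v w.

Definition mono_P3_free (T : finType) (G : two_colored_graph T) : Prop :=
  forall u v w, ~ mono_P3 G (red G) u v w /\ ~ mono_P3 G (blue G) u v w.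

Definition red_deg (T : finType) (G : two_colored_graph T) (v : T) : nat :=
  #|[set x | red G v x]|.
Definition blue_deg (T : finType) (G : two_colored_graph T) (v : T) : nat :=
  #|[set x | blue G v x]|.

(* Main.v *)
Require Import Defs.
From mathcomp Require Import all_boot.

Lemma aux (T : finType) (c d : rel T) (v : T) (csym : symmetric c) :
  (forall x y z, ~ mono_K3 c x y z) -> (forall x y z, ~ mono_K3 d x y z) ->
  (forall x y z, ~ [/\ x != z, c x y, c y z & ~~ (c x z || d x z)]) ->
  (#|[set x | c v x]| <= 2)%N.
Proof.
move=> HKc HKd HP.
rewrite leqNgt; apply/card_gt2P => [[x [y [z [[hx hy hz] [nxy nyz nzx]]]]]].
rewrite !inE in hx hy hz.
have key : forall p q, c v p -> c v q -> p != q -> d p q.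
  move=> p q hp hq npq.
  case: (boolP (c p q)) => cpq.
    by exfalso; apply: (HKc v p q); split.
  case: (boolP (d p q)) => // dpq.
  exfalso; apply: (HP p v q); split => //; first by rewrite csym.
  by rewrite negb_or cpq dpq.
apply: (HKd x y z); split; apply: key => //; by rewrite eq_sym.
Qed.

Theorem lemma4 (T : finType) (G : two_colored_graph T) :
  mono_K3_free G -> mono_P3_free G ->
  forall v : T, (blue_deg G v <= 2)%N /\ (red_deg G v <= 2)%N.
Proof.
move=> HK HP v; split.
  apply: (@aux _ (blue G) (red G) v (@blue_sym _ G)).
  - by move=> x y z; case: (HK x y z) => H1 H2.
  - by move=> x y z; case: (HK x y z) => H1 H2.
  move=> x y z [a b c e]; case: (HP x y z) => _ H; apply: H; split => //; by rewrite /adj orbC.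
apply: (@aux _ (red G) (blue G) v (@red_sym _ G)).
- by move=> x y z; case: (HK x y z) => H1 H2.
- by move=> x y z; case: (HK x y z) => H1 H2.
by move=> x y z; case: (HP x y z).
Qed.
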